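(* Let $(X,u)$ and $(Y,v)$ be Čech closure spaces, let $Y^X$ be the set of all continuous maps $(X,u)\to(Y,v)$, and let $\tau$ be the finest proper topology on $Y^X$. A subset $G\subset Y^X$ is $\tau$-open if and only if for every $f\in G$ and every net $(f_\lambda)_{\lambda\in\Lambda}$ in $Y^X$ such that $$\overline{\lim_{\Lambda}}\, f_\lambda^{-1}(B)\subset f^{-1}(v(B))\quad\text{for every } B\subset Y,$$ there exists $\lambda_0\in\Lambda$ with $f_\lambda\in G$ for every $\lambda\ge\lambda_0$.
   Context: A Čech closure space $(X,u)$ is a set $X$ with an operator $u:\mathcal P(X)\to\mathcal P(X)$ satisfying $u(\emptyset)=\emptyset$, $A\subset u(A)$, and $u(A\cup B)=u(A)\cup u(B)$. The interior is $\mathrm{int}_u A=X\setminus u(X\setminus A)$; $U$ is a neighbourhood of $x$ if $x\in\mathrm{int}_uU$. A map $f:(X,u)\to(Y,v)$ is continuous if $f(u(A))\subset v(f(A))$ for all $A$. For a net $(A_\lambda)_{\lambda\in\Lambda}$ of subsets of $X$, its upper limit $\overline{\lim_{\Lambda}}A_\lambda$ is the set of all $x\in X$ such that for every $\lambda_0\in\Lambda$ and every neighbourhood $U$ of $x$ there is $\lambda\ge\lambda_0$ with $A_\lambda\cap U\ne\emptyset$. The product $(Z,w)\times(X,u)$ is $Z\times X$ with the closure operator for which the sets $W\times U$ ($W$ a neighbourhood of $z$, $U$ of $x$) form a neighbourhood base at $(z,x)$; for $g:Z\times X\to Y$, $g^*(z)(x)=g(z,x)$. A closure operator $\sigma$ on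 $Y^X$ is proper if for every closure space $(Z,w)$, continuity of $g:(Z,w)\times(X,u)\to(Y,v)$ implies continuity of $g^*:(Z,w)\to(Y^X,\sigma)$. A topology on $Y^X$ is proper if its Kuratowski closure operator is proper; the finest proper topology is the largest (with respect to inclusion of open sets) proper topology on $Y^X$, which exists. *)

(* Defs.v *)
From mathcomp Require Import all_boot.
From mathcomp Require Import boolp classical_sets.
Unset Printing Implicit Defensive.
Local Open Scope classical_set_scope.

Definition is_closure {X : Type} (u : set X -> set X) : Prop :=
  [/\ u set0 = set0,
      (forall A, A `<=` u A) &
      (forall A B, u (A `|` B) = u A `|` u B)].

Definition cl_int {X : Type} (u : set X -> set X) (A : set X) : set X :=
  ~` u (~` A).

Definition cl_nbhd {X : Type} (u : set X -> set X) (x : X) (U : set X) : Prop :=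
  cl_int u U x.

Definition cl_continuous {X Y : Type} (u : set X -> set X) (v : set Y -> set Y)
  (f : X -> Y) : Prop :=
  forall A : set X, f @` (u A) `<=` v (f @` A).

(* product closure: the sets W × U (W nbhd of z, U nbhd of x) form a
   neighbourhood base at (z, x); hence (z,x) is in the closure of S iff
   every such W × U meets S. *)
Definition prod_closure {Z X : Type} (w : set Z -> set Z) (u : set X -> set X)
  (S : set (Z * X)) : set (Z * X) :=
  [set p | forall (W : set Z) (U : set X), cl_nbhd w p.1 W -> cl_nbhd u p.2 U ->
           (W `*` U) `&` S !=set0].

Definition contmap {X Y : Type} (u : set X -> set X) (v : set Y -> set Y) : Type :=
  {f : X -> Y | cl_continuous u v f}.

Definition proper_closure {X Y : Type} (u : set X -> set X) (v : set Y -> set Y)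
  (sigma : set (contmap u v) -> set (contmap u v)) : Prop :=
  forall (Z : Type) (w : set Z -> set Z), is_closure w ->
  forall (g : Z * X -> Y), cl_continuous (prod_closure w u) v g ->
  forall (gs : Z -> contmap u v), (forall z x, proj1_sig (gs z) x = g (z, x)) ->
  cl_continuous w sigma gs.

Definition is_topology {T : Type} (O : set (set T)) : Prop :=
  [/\ O setT, O set0,
      (forall (I : Type) (F : I -> set T), (forall i, O (F i)) -> O (\bigcup_i F i)) &
      (forall A B, O A -> O B -> O (A `&` B))].

Definition kclosure {T : Type} (O : set (set T)) (A : set T) : set T :=
  [set t | forall G, O G -> G t -> G `&` A !=set0].

Definition proper_topology {X Y : Type} (u : set X -> set X) (v : set Y -> set Y)
  (O : set (set (contmap u v))) : Prop :=
  is_topology O /\ proper_closure u v (kclosure O).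

Definition finest_proper_topology {X Y : Type} (u : set X -> set X) (v : set Y -> set Y)
  (O : set (set (contmap u v))) : Prop :=
  proper_topology u v O /\
  forall O' : set (set (contmap u v)), proper_topology u v O' -> O' `<=` O.

Definition directed {L : Type} (le : L -> L -> Prop) : Prop :=
  [/\ (exists l : L, True),
      (forall l, le l l),
      (forall a b c, le a b -> le b c -> le a c) &
      (forall a b, exists c, le a c /\ le b c)].

Definition upper_limit {X : Type} (u : set X -> set X) {L : Type}
  (le : L -> L -> Prop) (A : L -> set X) : set X :=
  [set x | forall (l0 : L) (U : set X), cl_nbhd u x U ->
           exists l, le l0 l /\ A l `&` U !=set0].

(* Main.v *)
Require Import Defs.
From mathcomp Require Import all_boot.
From mathcomp Require Import boolp classical_sets.
Local Open Scope classical_set_scope.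

Lemma cl_mono {X : Type} (u : set X -> set X) : is_closure u ->
  forall A B, A `<=` B -> u A `<=` u B.
Proof.
case=> _ _ hU A B AB; have <- : A `|` B = B by apply/setUidPr.
by rewrite hU => x ux; left.
Qed.

Lemma cl_meet {X : Type} (u : set X -> set X) : is_closure u ->
  forall A x, u A x <-> (forall U, cl_nbhd u x U -> U `&` A !=set0).
Proof.
move=> hu A x; split.
- move=> uAx U nU; apply: contrapT => hne.
  rewrite /cl_nbhd /cl_int in nU; apply: nU.
  have sub : A `<=` ~` U by move=> a Aa Ua; apply: hne; exists a.
  exact: (cl_mono u hu _ _ sub).
- move=> h; apply: contrapT => nux.
  have nU : cl_nbhd u x (~` A) by rewrite /cl_nbhd /cl_int setCK.
  by case: (h _ nU) => a [].
Qed.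

Lemma nbhdI {X : Type} (u : set X -> set X) : is_closure u ->
  forall x U V, cl_nbhd u x U -> cl_nbhd u x V -> cl_nbhd u x (U `&` V).
Proof.
move=> [_ _ hU] x U V nU nV; rewrite /cl_nbhd /cl_int setCI hU.
by case.
Qed.

Lemma nbhdT {X : Type} (u : set X -> set X) : is_closure u ->
  forall x, cl_nbhd u x setT.
Proof. by move=> [h0 _ _] x; rewrite /cl_nbhd /cl_int setCT h0. Qed.

Lemma nfreq {L : Type} (le : L -> L -> Prop) (P : L -> Prop) :
  ~ (forall l0, exists l, le l0 l /\ P l) -> exists l0, forall l, le l0 l -> ~ P l.
Proof.
move=> h; apply: contrapT => h2; apply: h => l0; apply: contrapT => h3.
apply: h2; exists l0 => l le0l Pl; apply: h3; by exists l.
Qed.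

Section Dir.
Variables (L : Type) (le : L -> L -> Prop) (hdir : directed le).

Definition wL (A : set (option L)) : set (option L) :=
  A `|` [set z | z = None /\ (forall l0, exists l, le l0 l /\ A (Some l))].

Lemma wL_closure : is_closure wL.
Proof.
case: hdir => [[l _] hrefl htrans hup]; split.
- rewrite predeqE => z; split => //; case => //.
  by case=> _ /(_ l) [l' [_ []]].
- by move=> A z Az; left.
- move=> A B; rewrite predeqE => z; split.
  + case; first by case=> ?; [left; left | right; left].
    case=> -> hf.
    case: (pselect (forall l0, exists l, le l0 l /\ A (Some l))) => hA.
      by left; right.
    case: (pselect (forall l0, exists l, le l0 l /\ B (Some l))) => hB.
      by right; right.
    have [l1 h1] := nfreq le (fun l => A (Some l)) hA; have [l2 h2] := nfreq le (fun l => B (Some l)) hB.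
    have [c [c1 c2]] := hup l1 l2.
    have [l' [cl' [Al|Bl]]] := hf c.
      by exfalso; apply: (h1 l') => //; apply: htrans cl'.
    by exfalso; apply: (h2 l') => //; apply: htrans cl'.
  + case; case.
    * by move=> Az; left; left.
    * case=> -> hf; right; split => // l0; have [l' [? ?]] := hf l0.
      by exists l'; split => //; left.
    * by move=> Bz; left; right.
    * case=> -> hf; right; split => // l0; have [l' [? ?]] := hf l0.
      by exists l'; split => //; right.
Qed.
End Dir.

Lemma fwd (X Y : Type) (u : set X -> set X) (v : set Y -> set Y)
  (hu : is_closure u) (hv : is_closure v)
  (tau : set (set (contmap u v))) (hp : proper_closure u v (kclosure tau))
  (G : set (contmap u v)) : tau G ->
  (forall f : contmap u v, G f ->
   forall (L : Type) (le : L -> L -> Prop), directed le ->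
   forall fn : L -> contmap u v,
     (forall B : set Y,
        upper_limit u le (fun l => proj1_sig (fn l) @^-1` B)
        `<=` proj1_sig f @^-1` v B) ->
     exists l0 : L, forall l, le l0 l -> G (fn l)).
Proof.
move=> tG f Gf L le dir fn C; apply: contrapT => Hne.
have freq : forall l0, exists l, le l0 l /\ ~ G (fn l).
  move=> l0; apply: contrapT => h; apply: Hne; exists l0 => l l0l.
  apply: contrapT => nG; apply: h; by exists l.
have hw := @wL_closure L le dir.
pose g : option L * X -> Y := fun p =>
  match p.1 with Some l => proj1_sig (fn l) p.2 | None => proj1_sig f p.2 end.
pose gs : option L -> contmap u v := fun z =>
  match z with Some l => fn l | None => f end.
have hgs : forall z x, proj1_sig (gs z) x = g (z, x) by case.
have hg : cl_continuous (prod_closure (wL L le) u) v g.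
  move=> S _ [[z x] Sp <-].
  case: z Sp => [l|] Sp.
  - pose Sl := [set x' | S (Some l, x')].
    have uSl : u Sl x.
      apply/(cl_meet u hu) => U nU.
      have nW : cl_nbhd (wL L le) (Some l) [set Some l].
        by case => [/(_ erefl)|[]].
      have [[z' x'] [[/= -> Ux'] Sx']] := Sp _ _ nW nU.
      by exists x'.
    have := proj2_sig (fn l) Sl _ (ex_intro2 _ _ x uSl erefl).
    apply: (cl_mono v hv) => _ [x' Sx' <-]; by exists (Some l, x').
  - pose SN := [set x' | S (None, x')].
    case: (pselect (u SN x)) => uSN.
      have := proj2_sig f SN _ (ex_intro2 _ _ x uSN erefl).
      apply: (cl_mono v hv) => _ [x' Sx' <-]; by exists (None, x').
    have [U' [nU' dU']] : exists U', cl_nbhd u x U' /\ ~ (U' `&` SN !=set0).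
      apply: contrapT => h; apply: uSN; apply/(cl_meet u hu) => U nU.
      apply: contrapT => h2; apply: h; by exists U.
    case: (pselect (upper_limit u le (fun l => proj1_sig (fn l) @^-1` (g @` S)) x)) => ul.
      exact: C ul.
    have [l0 [U [nU hU]]] : exists l0 U, cl_nbhd u x U /\
        ~ exists l, le l0 l /\ (proj1_sig (fn l) @^-1` (g @` S)) `&` U !=set0.
      apply: contrapT => h; apply: ul => l0 U nU; apply: contrapT => h2.
      apply: h; by exists l0, U.
    pose W := [set z : option L | z = None \/ exists l, z = Some l /\ le l0 l].
    have nW : cl_nbhd (wL L le) None W.
      case => [[]|]; first by left.
      case=> _ /(_ l0) [l [l0l nWl]]; apply: nWl; right; by exists l.
    have [[z' x'] [[/= Wz' [Ux' U'x']] Sx']] := Sp _ _ nW (nbhdI u hu _ _ _ nU nU').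
    case: Wz' => [Ez|[l [Ez l0l]]]; subst z'.
      by exfalso; apply: dU'; exists x'.
    exfalso; apply: hU; exists l; split => //; exists x'; split => //.
    by exists (Some l, x').
pose A := [set z : option L | exists l, z = Some l /\ ~ G (fn l)].
have := hp _ (wL L le) hw g hg gs hgs A f.
move=> H.
have wA : [set gs x | x in wL L le A] f.
  exists None => //; right; split => // l0.
  have [l [l0l nG]] := freq l0; exists l; split => //; by exists l.
have [y [Gy [z [l [El nG]] Ey]]] := H wA G tG Gf.
by subst; apply: nG.
Qed.

Definition Pnet {X Y : Type} (u : set X -> set X) (v : set Y -> set Y)
  (G : set (contmap u v)) : Prop :=
  forall f : contmap u v, G f ->
   forall (L : Type) (le : L -> L -> Prop), directed le ->
   forall fn : L -> contmap u v,
     (forall B : set Y,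
        upper_limit u le (fun l => proj1_sig (fn l) @^-1` B)
        `<=` proj1_sig f @^-1` v B) ->
     exists l0 : L, forall l, le l0 l -> G (fn l).

Lemma Pnet_proper (X Y : Type) (u : set X -> set X) (v : set Y -> set Y)
  (hu : is_closure u) (hv : is_closure v) :
  proper_topology u v [set G | Pnet u v G].
Proof.
split; first split.
- move=> f _ L le [[l _] _ _ _] fn _; by exists l.
- by [].
- move=> I F hF f [i _ Fif] L le dir fn C.
  have [l0 h] := hF i f Fif L le dir fn C.
  by exists l0 => l /h Fl; exists i.
- move=> A B hA hB f [Af Bf] L le dir fn C.
  have [l1 h1] := hA f Af L le dir fn C.
  have [l2 h2] := hB f Bf L le dir fn C.
  case: dir => _ _ htrans /(_ l1 l2) [c [c1 c2]].
  exists c => l cl; split; [apply: h1 | apply: h2]; exact: htrans cl.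
- move=> Z w hw g hg gs hgs A _ [z wAz <-] G' PG' G'z.
  have meet := (cl_meet w hw A z).1 wAz.
  pose L := {p : set Z * Z | cl_nbhd w z p.1 /\ p.1 p.2 /\ A p.2}.
  pose le (a b : L) := (proj1_sig b).1 `<=` (proj1_sig a).1.
  pose fn (a : L) := gs (proj1_sig a).2.
  have dir : directed le.
    split.
    + have [a [_ Aa]] := meet _ (nbhdT w hw z).
      by exists (exist _ (setT, a) (conj (nbhdT w hw z) (conj I Aa))).
    + by move=> a.
    + by move=> a b c ab bc y cy; apply: ab; apply: bc.
    + move=> [[W1 a1] p1] [[W2 a2] p2]; have [n1 _] := p1; have [n2 _] := p2.
      have n12 := nbhdI w hw _ _ _ n1 n2.
      have [a [Wa Aa]] := meet _ n12.
      exists (exist _ (W1 `&` W2, a) (conj n12 (conj Wa Aa))).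
      by split => y [].
  have C : forall B : set Y,
        upper_limit u le (fun l => proj1_sig (fn l) @^-1` B)
        `<=` proj1_sig (gs z) @^-1` v B.
    move=> B x ulx; rewrite /= hgs.
    pose S := [set p | B (g p)].
    have pS : prod_closure w u S (z, x).
      move=> W U nW nU /=.
      have [a0 [Wa0 Aa0]] := meet _ nW.
      have [[[W' a'] [nW' [W'a' Aa']]] [le0 [x' [Bx' Ux']]]] :=
        ulx (exist _ (W, a0) (conj nW (conj Wa0 Aa0))) U nU.
      exists (a', x'); split; first split => //=.
        exact: le0.
      by rewrite /S /= -hgs.
    have := hg S _ (ex_intro2 _ _ (z, x) pS erefl).
    by apply: (cl_mono v hv) => _ [p Sp <-].
  have [l0 h] := PG' _ G'z L le dir fn C.
  have Ga := h l0 (fun y Hy => Hy).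
  exists (gs (proj1_sig l0).2); split => //.
  by exists (proj1_sig l0).2 => //; case: (proj2_sig l0) => _ [].
Qed.

Theorem theorem8 (X Y : Type) (u : set X -> set X) (v : set Y -> set Y)
  (hu : is_closure u) (hv : is_closure v)
  (tau : set (set (contmap u v))) (htau : finest_proper_topology u v tau)
  (G : set (contmap u v)) :
  tau G <->
  (forall f : contmap u v, G f ->
   forall (L : Type) (le : L -> L -> Prop), directed le ->
   forall fn : L -> contmap u v,
     (forall B : set Y,
        upper_limit u le (fun l => proj1_sig (fn l) @^-1` B)
        `<=` proj1_sig f @^-1` v B) ->
     exists l0 : L, forall l, le l0 l -> G (fn l)).

Proof.
split.
- exact: fwd hu hv tau htau.1.2 G.
- move=> PG; exact: (htau.2 _ (Pnet_proper X Y u v hu hv) G PG).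
Qed.
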